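(* Let $p$ be a binary word with exactly $2$ runs and length $l\ge3$. For every $n\ge l+2$, $B_{n,p}(M_{n,p}-1)=0$. In particular, $p$ has an internal zero at every $n\ge l+2$.
   Context: $c_p(w)$ is the number of occurrences of $p$ as a (not necessarily consecutive) subsequence of $w$; $B_{n,p}(k)$ is the number of binary words of length $n$ with $c_p(w)=k$; $M_{n,p}=\max\{c_p(w):w\in\{0,1\}^n\}$. A run is a maximal block of consecutive equal letters. $p$ has an internal zero at $n$ if there exist $0\le k_1<k_2<k_3$ with $B_{n,p}(k_1)\ne0$, $B_{n,p}(k_2)=0$, $B_{n,p}(k_3)\ne0$. *)

(* Defs.v *)
From mathcomp Require Import all_boot.
Set Implicit Arguments. Unset Strict Implicit. Unset Printing Implicit Defensive.

(* Binary words are sequences of booleans (false = 0, true = 1). *)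

(* c_p(w): number of occurrences of p as a (not necessarily consecutive)
   subsequence of w, i.e. number of index subsets of w (encoded as masks)
   selecting exactly the word p. *)
Definition occ (p w : seq bool) : nat :=
  #|[set m : (size w).-tuple bool | mask m w == p]|.

Definition B (n : nat) (p : seq bool) (k : nat) : nat :=
  #|[set w : n.-tuple bool | occ p w == k]|.

Definition M (n : nat) (p : seq bool) : nat :=
  \max_(w : n.-tuple bool) occ p w.

Definition nruns (s : seq bool) : nat :=
  if s is x :: s' then (count id (pairmap (fun a b => a != b) x s')).+1 else 0.

Definition internal_zero (n : nat) (p : seq bool) : Prop :=
  exists k1 k2 k3, [/\ k1 < k2 < k3, B n p k1 != 0, B n p k2 = 0 & B n p k3 != 0].

(* Main.v *)
Require Import Defs.
From mathcomp Require Import all_boot zify.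
Set Implicit Arguments. Unset Strict Implicit. Unset Printing Implicit Defensive.

Lemma card_split n (P : pred (seq bool)) :
  #|[set m : n.+1.-tuple bool | P m]| =
  #|[set m : n.-tuple bool | P (true :: m)]| + #|[set m : n.-tuple bool | P (false :: m)]|.
Proof.
rewrite !cardsE -!sum1_card.
rewrite (reindex (fun u : bool * n.-tuple bool => [tuple of u.1 :: u.2])) /=; last first.
  exists (fun t : n.+1.-tuple bool => (thead t, [tuple of behead t])) => [[b t] _|t _] /=.
    by congr pair; apply: val_inj.
  by rewrite [RHS]tuple_eta.
rewrite big_mkcond /=.
transitivity (\sum_(u : bool * n.-tuple bool) (if P (u.1 :: (u.2 : seq bool)) then 1 else 0)).
  by apply: eq_bigr => u _; rewrite unfold_in.
rewrite -(pair_big xpredT xpredT (fun (b : bool) (t : n.-tuple bool) => if P (b :: (t : seq bool)) then 1 else 0)) /=.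
rewrite big_bool /= !big_mkcond /=.
by congr addn; rewrite [RHS]big_mkcond /=; apply: eq_bigr => t _; rewrite unfold_in.
Qed.

Lemma occ_nil p : occ p [::] = (p == [::]).
Proof.
rewrite /occ; case: p => [|y p] /=.
  transitivity #|[set: 0.-tuple bool]|; last by rewrite cardsT card_tuple.
  by apply: eq_card => m; rewrite !inE mask0.
by apply: eq_card0 => m; rewrite !inE mask0.
Qed.

Lemma occ_cons p y w :
  occ p (y :: w) = occ p w + (if p is z :: p' then (z == y) * occ p' w else 0).
Proof.
rewrite /occ (card_split (size w) (fun m => mask m (y :: w) == p)) addnC; congr addn.
case: p => [|z p'].
  by apply: eq_card0 => m; rewrite !inE.
case: (eqVneq z y) => [->|nzy]; rewrite ?mul1n ?mul0n.
  by apply: eq_card => m; rewrite !inE /= eqseq_cons eqxx.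
by apply: eq_card0 => m; rewrite !inE /= eqseq_cons eq_sym (negbTE nzy).
Qed.

Definition pw (x : bool) a b := nseq a x ++ nseq b (~~ x).

Lemma neqb (x y : bool) : y != x -> y = ~~ x.
Proof. by case: x; case: y. Qed.

Lemma occ_ones y b w : occ (nseq b y) w = 'C(count_mem y w, b).
Proof.
elim: w b => [|z w IH] b.
  by rewrite occ_nil; case: b.
rewrite occ_cons /=; case: b => [|b] /=; first by rewrite (IH 0) !bin0 addn0.
rewrite (IH b) (IH b.+1); case: (eqVneq z y) => [_|h].
  by rewrite mul1n add1n binS.
by rewrite mul0n addn0 add0n.
Qed.

Lemma occ_pw_x x a b w : occ (pw x a.+1 b) (x :: w) = occ (pw x a.+1 b) w + occ (pw x a b) w.
Proof. by rewrite occ_cons /= eqxx mul1n. Qed.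

Lemma occ_pw_nx x a b w : occ (pw x a.+1 b) (~~ x :: w) = occ (pw x a.+1 b) w.
Proof. by rewrite occ_cons /=; case: x => /=; rewrite mul0n addn0. Qed.

Lemma occ_pw0 x b w : occ (pw x 0 b) w = 'C(count_mem (~~ x) w, b).
Proof. by rewrite /pw /= occ_ones. Qed.

Lemma occ_nil_pw x a b : occ (pw x a.+1 b) [::] = 0.
Proof. by rewrite occ_nil. Qed.

Lemma occ_sorted x a b k m :
  occ (pw x a b) (nseq k x ++ nseq m (~~ x)) = 'C(k, a) * 'C(m, b).
Proof.
elim: k a => [|k IH] a /=.
  case: a => [|a]; first by rewrite occ_pw0 bin0 mul1n count_nseq /= eqxx mul1n.
  rewrite bin0n mul0n.
  elim: m => [|m IHm] /=; first exact: occ_nil_pw.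
  by rewrite occ_pw_nx.
case: a => [|a].
  rewrite occ_pw0 bin0 mul1n /= count_cat !count_nseq /= eqxx mul1n.
  by case: (x).
by rewrite occ_pw_x !IH binS mulnDl.
Qed.

Lemma eqnegF (x : bool) : (x == ~~ x) = false. Proof. by case: x. Qed.
Lemma eqnegF' (x : bool) : (~~ x == x) = false. Proof. by case: x. Qed.

Lemma occ_le x a b w :
  occ (pw x a b) w <= 'C(count_mem x w, a) * 'C(count_mem (~~ x) w, b).
Proof.
elim: w a => [|y w IH] a.
  by case: a => [|a]; [rewrite occ_pw0 bin0 mul1n | rewrite occ_nil_pw].
case: a => [|a]; first by rewrite occ_pw0 bin0 mul1n.
have [->|/neqb ->] := eqVneq y x.
  rewrite occ_pw_x /= eqxx eqnegF add0n add1n binS mulnDl.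
  exact: leq_add (IH a.+1) (IH a).
rewrite occ_pw_nx /= eqxx eqnegF' add0n add1n.
apply: leq_trans (IH a.+1) _.
by rewrite leq_mul2l leq_bin2l ?orbT.
Qed.

Fixpoint uns (x : bool) (w : seq bool) : bool :=
  if w is y :: w' then (if y == x then uns x w' else x \in w') else false.

Lemma uns_in x w : uns x w -> x \in w.
Proof.
elim: w => [|y w IH] //=.
case: (eqVneq y x) => [->|_]; first by rewrite inE eqxx.
by move=> h; rewrite inE h orbT.
Qed.

Lemma count_pos (x : bool) (w : seq bool) : x \in w -> 0 < count_mem x w.
Proof. by move=> h; rewrite -has_count; apply/hasP; exists x => //=. Qed.

Lemma occ_uns x a b w : uns x w ->
  occ (pw x a.+1 b.+1) w + 'C((count_mem x w).-1, a) * 'C((count_mem (~~ x) w).-1, b)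
  <= 'C(count_mem x w, a.+1) * 'C(count_mem (~~ x) w, b.+1).
Proof.
elim: w a => [|y w IH] a //.
have [->|/neqb ->] := eqVneq y x.
  rewrite /= eqxx => u.
  have Zp := count_pos (uns_in u).
  rewrite occ_pw_x /= eqnegF !add0n add1n.
  case: a => [|a].
    have := IH 0 u; rewrite occ_pw0 !bin0 !mul1n !bin1 mulSn.
    by move=> h; rewrite addnAC addnC leq_add2l.
  have := IH a.+1 u; have := IH a u.
  move: (count_mem x w) Zp => [|Z] // _.
  move=> /= h0 h1; have := leq_add h1 h0.
  by rewrite addnACA -!mulnDl -!binS.
rewrite /= eqxx eqnegF' => u.
have Zp := count_pos u.
rewrite occ_pw_nx /= !add0n add1n.
have := occ_le x a.+1 b.+1 w.
move: (count_mem x w) Zp => [|Z] // _ hle; rewrite succnK.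
rewrite (binS (count_mem (~~ x) w)) mulnDr.
apply: leq_add => //.
by rewrite leq_mul2r (binS Z) leq_addl orbT.
Qed.

Lemma notin_nseq (x : bool) w : x \notin w -> w = nseq (size w) (~~ x).
Proof.
elim: w => [|y w IH] //=; rewrite inE negb_or => /andP [hy hw].
by rewrite -IH // (neqb (y:=y) (x:=x)) // eq_sym.
Qed.

Lemma sorted_or x w :
  uns x w \/ w = nseq (count_mem x w) x ++ nseq (count_mem (~~ x) w) (~~ x).
Proof.
elim: w => [|y w IH] /=; first by right.
have [->|/neqb ->] := eqVneq y x.
  rewrite eqnegF add1n add0n; case: IH => [h|h]; [by left | right].
  by rewrite {1}h.
rewrite eqxx add0n add1n.
case: (boolP (x \in w)) => [h|h]; first by left.
right; rewrite (count_memPn h) /=.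
have e := notin_nseq h; by rewrite [in count_mem _ w]e count_nseq /= eqxx mul1n -e.
Qed.

Lemma pm0 (x : bool) s : count id (pairmap (fun a b => a != b) x s) = 0 -> s = nseq (size s) x.
Proof.
elim: s x => [|y s IH] x //=.
case: (eqVneq x y) => [<-|] //= h.
by rewrite -IH.
Qed.

Lemma pm1 (x : bool) s : count id (pairmap (fun a b => a != b) x s) = 1 ->
  exists a b, s = nseq a x ++ nseq b.+1 (~~ x).
Proof.
elim: s x => [|y s IH] x //=.
case: (eqVneq x y) => [<-|nxy] /=.
  by move=> /IH [a [b ->]]; exists a.+1, b.
move=> [] /pm0 h; exists 0, (size s) => /=.
have ey : y = ~~ x by apply: neqb; rewrite eq_sym.
by rewrite {1}h -ey.
Qed.

Lemma nruns2 p : nruns p = 2 -> exists x a b, p = pw x a.+1 b.+1.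
Proof.
case: p => [|x s] //= [] /pm1 [a [b ->]].
by exists x, a, b.
Qed.
Lemma ar_gen AB K Pp Qq : 0 < AB -> AB < K -> AB + K * Qq = K * Pp -> False.
Proof.
move=> h0 h e. case: (leqP Pp Qq) => hp.
  have := leq_mul (leqnn K) hp. lia.
have := leq_mul (leqnn K) hp. rewrite mulnS. lia.
Qed.
Lemma ar_a0 b u v K : 1 <= u + v -> b.+1 + v <= K ->
  (b.+1 + K * (b.+1 * u.+1) = K * v.+1 \/ b.+1 + K * v.+1 = K * (b.+1 * u.+1)) -> 0 < b -> False.
Proof.
move=> huv hK [e|e] hb.
  have h : b.+1 * u.+1 < v.+1.
    case: (leqP v.+1 (b.+1 * u.+1)) => // hp.
    have := leq_mul (leqnn K) hp. lia.
  apply: (@ar_gen b.+1 K v.+1 (b.+1*u.+1)) => //; nia.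
have h : v.+1 < b.+1 * u.+1.
  case: (leqP (b.+1 * u.+1) v.+1) => // hp.
  have := leq_mul (leqnn K) hp. lia.
have [d hd] : exists d, b.+1 * u.+1 = v.+2 + d by exists (b.+1 * u.+1 - v.+2); lia.
rewrite hd mulnDr mulnS in e.
have : K * d.+1 <= b.+1 by nia.
nia.
Qed.

Lemma binGE m j : 0 < j < m -> m <= 'C(m, j).
Proof.
elim: m j => [|m IH] [|j] //.
move=> /andP [_ hj]; rewrite ltnS in hj.
rewrite binS; case: j hj => [|j] hj; first by rewrite bin1 bin0 addn1.
have h1 : m <= 'C(m, j.+1) by apply: IH.
have h2 : 0 < 'C(m, j.+2) by rewrite bin_gt0.
lia.
Qed.

Definition f a b n k := 'C(k, a) * 'C(n - k, b).

Lemma E1 a b n t : t < n ->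
  a.+1 * b.+1 * f a.+1 b.+1 n t.+1 = 'C(t, a) * 'C(n - t.+1, b) * (t.+1 * (n - t.+1 - b)).
Proof.
move=> _; rewrite /f.
have h1 := mul_bin_diag t.+1 a. have h2 := mul_bin_left (n - t.+1) b.
rewrite /= in h1.
rewrite mulnACA -h1 h2.
move: ('C(t, a)) ('C(n - t.+1, b)) => x y; nia.
Qed.

Lemma E2 a b n t : t < n ->
  a.+1 * b.+1 * f a.+1 b.+1 n t = 'C(t, a) * 'C(n - t.+1, b) * ((t - a) * (n - t)).
Proof.
move=> _; rewrite /f.
have h1 := mul_bin_left t a. have h2 := mul_bin_diag (n - t) b.
rewrite -subnS in h2.
rewrite mulnACA h1 -h2.
move: ('C(t, a)) ('C(n - t.+1, b)) => x y; nia.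
Qed.

Lemma sgn_up a b n t : t < n -> b.+1 * t.+1 <= a.+1 * (n - t) ->
  f a.+1 b.+1 n t <= f a.+1 b.+1 n t.+1.
Proof.
move=> tn h.
rewrite -(@leq_pmul2l (a.+1 * b.+1)) // E1 // E2 //.
case: (leqP a t) => ha; last by rewrite bin_small.
case: (leqP b (n - t.+1)) => hb; last by rewrite (bin_small hb) muln0.
rewrite leq_mul2l; apply/orP; right.
have [u eu] : exists u, t = a + u by exists (t - a); lia.
have [v ev] : exists v, n - t.+1 = b + v by exists (n - t.+1 - b); lia.
have e3 : n - t = (b + v).+1 by lia.
rewrite e3 ev eu in h *.
have -> : a + u - a = u by lia.
have -> : b + v - b = v by lia.
nia.
Qed.

Lemma sgn_down a b n t : t < n -> a.+1 * (n - t) <= b.+1 * t.+1 ->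
  f a.+1 b.+1 n t.+1 <= f a.+1 b.+1 n t.
Proof.
move=> tn h.
rewrite -(@leq_pmul2l (a.+1 * b.+1)) // E1 // E2 //.
case: (leqP a t) => ha; last by rewrite bin_small.
case: (leqP b (n - t.+1)) => hb; last by rewrite (bin_small hb) muln0.
rewrite leq_mul2l; apply/orP; right.
have [u eu] : exists u, t = a + u by exists (t - a); lia.
have [v ev] : exists v, n - t.+1 = b + v by exists (n - t.+1 - b); lia.
have e3 : n - t = (b + v).+1 by lia.
rewrite e3 ev eu in h *.
have -> : a + u - a = u by lia.
have -> : b + v - b = v by lia.
nia.
Qed.

Lemma adj_core a b u v K : 1 <= u + v -> 0 < a + b ->
  (a = 0 -> K = 'C(b.+1 + v, b)) -> (b = 0 -> K = 'C(a.+1 + u, a)) ->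
  (0 < a -> 0 < b -> K = 'C(a.+1 + u, a) * 'C(b.+1 + v, b)) ->
  (a.+1 * b.+1 + K * (b.+1 * u.+1) = K * (a.+1 * v.+1) \/
   a.+1 * b.+1 + K * (a.+1 * v.+1) = K * (b.+1 * u.+1)) -> False.
Proof.
move=> huv hab Ka Kb Kab H.
case: (posnP a) => [a0|ap].
  subst a. have hb : 0 < b by [].
  have hK : b.+1 + v <= K by rewrite Ka //; apply: binGE; lia.
  apply: (ar_a0 huv hK _ hb). rewrite !mul1n in H. by case: H => H; [left|right].
case: (posnP b) => [b0|bp].
  subst b.
  have hK : a.+1 + u <= K by rewrite Kb //; apply: binGE; lia.
  have huv' : 1 <= v + u by lia.
  apply: (ar_a0 huv' hK _ ap). rewrite ?muln1 ?mul1n in H. by case: H => H; [right|left].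
have hX : a.+1 + u <= 'C(a.+1 + u, a) by apply: binGE; lia.
have hY : b.+1 + v <= 'C(b.+1 + v, b) by apply: binGE; lia.
have hK : a.+1 * b.+1 < K.
  rewrite Kab //; apply: leq_trans (leq_mul hX hY).
  rewrite mulnDl !mulnDr -addnA -[X in X < _]addn0 ltn_add2l.
  clear -huv; case: u huv => [|u] huv; first by case: v huv => // v _; rewrite mulnS.
  by rewrite addnCA mulSn addnA.
case: H => H.
  exact: (@ar_gen (a.+1 * b.+1) K (a.+1 * v.+1) (b.+1 * u.+1)).
exact: (@ar_gen (a.+1 * b.+1) K (b.+1 * u.+1) (a.+1 * v.+1)).
Qed.

Lemma adj a b n t : t < n -> a.+1 + b.+1 + 2 <= n -> 0 < a + b ->
  0 < f a.+1 b.+1 n t -> 0 < f a.+1 b.+1 n t.+1 ->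
  f a.+1 b.+1 n t.+1 <> (f a.+1 b.+1 n t).+1 /\ f a.+1 b.+1 n t <> (f a.+1 b.+1 n t.+1).+1.
Proof.
move=> tn hn hab h0 h1.
have [ha hb] : a < t /\ b < n - t.+1.
  by move: h0 h1; rewrite /f !muln_gt0 !bin_gt0 => /andP[? ?] /andP[? ?].
have [u eu] : exists u, t = a.+1 + u by exists (t - a.+1); lia.
have [v ev] : exists v, n - t.+1 = b.+1 + v by exists (n - t.+1 - b.+1); lia.
have huv : 1 <= u + v by lia.
have e1 := E1 a b tn; have e2 := E2 a b tn.
have r1 : t.+1 * (n - t.+1 - b) = a.+1 * v.+1 + u.+1 * v.+1.
  have -> : n - t.+1 - b = v.+1 by lia.
  by rewrite eu -mulnDl addnS.
have r2 : (t - a) * (n - t) = b.+1 * u.+1 + u.+1 * v.+1.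
  have -> : t - a = u.+1 by lia.
  have -> : n - t = b.+1 + v.+1 by lia.
  by rewrite mulnDr mulnC.
rewrite r1 in e1; rewrite r2 in e2.
have core := @adj_core a b u v ('C(t, a) * 'C(n - t.+1, b)) huv hab.
move: e1 e2 core.
move: (f a.+1 b.+1 n t.+1) (f a.+1 b.+1 n t) => F1 F0.
rewrite ev eu.
move=> e1 e2 core.
have core' := core (fun a0 => ltac:(by rewrite a0 bin0 mul1n)) (fun b0 => ltac:(by rewrite b0 bin0 muln1)) (fun _ _ => erefl).
move: ('C(a.+1 + u, a) * 'C(b.+1 + v, b)) e1 e2 core' => K e1 e2 core'.
rewrite !mulnDr in e1 e2.
split => E; subst; apply: core'.
  left; rewrite mulnSr in e1.
  move: e1 e2; move: (K * _) (K * (b.+1 * u.+1)) (K * (u.+1 * v.+1)) (a.+1 * b.+1 * F0) (a.+1 * b.+1).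
  move=> P Q R S T; lia.
right; rewrite mulnSr in e2.
move: e1 e2; move: (K * (a.+1 * v.+1)) (K * (b.+1 * u.+1)) (K * (u.+1 * v.+1)) (a.+1 * b.+1 * F1) (a.+1 * b.+1).
move=> P Q R S T; lia.
Qed.

Lemma mono_up (g : nat -> nat) i j : i <= j -> (forall t, i <= t < j -> g t <= g t.+1) -> g i <= g j.
Proof.
move=> /subnKC <-; elim: (j - i) => [|d IH] h; first by rewrite addn0.
rewrite addnS; apply: leq_trans (h _ _).
  by apply: IH => t /andP [h1 h2]; apply: h; rewrite h1 /= addnS ltnS ltnW.
by rewrite leq_addr /= addnS.
Qed.

Lemma mono_down (g : nat -> nat) i j : i <= j -> (forall t, i <= t < j -> g t.+1 <= g t) -> g j <= g i.
Proof.
move=> /subnKC <-; elim: (j - i) => [|d IH] h; first by rewrite addn0.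
rewrite addnS; apply: leq_trans (h _ _) _.
  by rewrite leq_addr /= addnS.
by apply: IH => t /andP [h1 h2]; apply: h; rewrite h1 /= addnS ltnS ltnW.
Qed.

Lemma ex_up (g : nat -> nat) i j : i <= j -> g i < g j -> exists t, i <= t < j /\ g t < g t.+1.
Proof.
move=> hij hg; case: (boolP [exists t : 'I_j, (i <= t) && (g t < g t.+1)]).
  by move=> /existsP [t /andP [h1 h2]]; exists t; rewrite h1 ltn_ord.
move=> /existsPn hn; exfalso.
have : g j <= g i.
  apply: mono_down => // t /andP [h1 h2].
  by have := hn (Ordinal h2); rewrite /= h1 /= -leqNgt.
by rewrite leqNgt hg.
Qed.

Lemma ex_down (g : nat -> nat) i j : i <= j -> g j < g i -> exists t, i <= t < j /\ g t.+1 < g t.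
Proof.
move=> hij hg; case: (boolP [exists t : 'I_j, (i <= t) && (g t.+1 < g t)]).
  by move=> /existsP [t /andP [h1 h2]]; exists t; rewrite h1 ltn_ord.
move=> /existsPn hn; exfalso.
have : g i <= g j.
  apply: mono_up => // t /andP [h1 h2].
  by have := hn (Ordinal h2); rewrite /= h1 /= -leqNgt.
by rewrite leqNgt hg.
Qed.

Lemma unimod a b n k ks : 0 < a + b -> a.+1 + b.+1 + 2 <= n -> k <= n -> ks <= n ->
  (forall t, t <= n -> f a.+1 b.+1 n t <= f a.+1 b.+1 n ks) ->
  2 <= f a.+1 b.+1 n ks -> f a.+1 b.+1 n k = (f a.+1 b.+1 n ks).-1 -> False.
Proof.
move=> hab hn hk hks hmax h2 hf.
set g := f a.+1 b.+1 n in hmax h2 hf.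
have gk1 : 1 <= g k by lia.
case: (ltngtP k ks) => hkk.
- have [j [/andP [hj1 hj2] hgj]] : exists j, k <= j < ks /\ g j < g j.+1.
    apply: ex_up; [exact: ltnW | lia].
  have jn : j < n by lia.
  have hsg : b.+1 * j.+1 < a.+1 * (n - j).
    rewrite ltnNge; apply/negP => hc.
    by have := sgn_down jn hc; rewrite leqNgt hgj.
  have hkj : g k <= g j.
    apply: mono_up => // t /andP [ht1 ht2].
    apply: sgn_up; first lia.
    have l1 : b.+1 * t.+1 <= b.+1 * j.+1 by rewrite leq_mul2l ltnW.
    have l2 : a.+1 * (n - j) <= a.+1 * (n - t) by rewrite leq_mul2l leq_sub2l ?orbT // ltnW.
    lia.
  have [ad _] := adj jn hn hab (leq_trans gk1 hkj) (ltnW (leq_ltn_trans (leq_trans gk1 hkj) hgj)).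
  have := hmax j.+1 jn.
  rewrite -/g in ad *. lia.
- have [j [/andP [hj1 hj2] hgj]] : exists j, ks <= j < k /\ g j.+1 < g j.
    apply: ex_down; [exact: ltnW | lia].
  have jn : j < n by lia.
  have hsg : a.+1 * (n - j) < b.+1 * j.+1.
    rewrite ltnNge; apply/negP => hc.
    by have := sgn_up jn hc; rewrite leqNgt hgj.
  have hkj : g k <= g j.+1.
    apply: mono_down => // t /andP [ht1 ht2].
    apply: sgn_down; first lia.
    have l1 : b.+1 * j.+1 <= b.+1 * t.+1 by rewrite leq_mul2l ltnW.
    have l2 : a.+1 * (n - t) <= a.+1 * (n - j) by rewrite leq_mul2l leq_sub2l ?orbT // ltnW.
    lia.
  have [_ ad] := adj jn hn hab (ltnW (leq_ltn_trans (leq_trans gk1 hkj) hgj)) (leq_trans gk1 hkj).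
  have := hmax j (ltnW jn).
  rewrite -/g in ad *. lia.
- subst; lia.
Qed.

Lemma countN (x : bool) (w : seq bool) : count_mem (~~ x) w = size w - count_mem x w.
Proof.
rewrite -(count_predC (pred1 x) w) addKn.
by apply: eq_count => y; case: x; case: y.
Qed.

Lemma sorted_tuple x a b n k : k <= n ->
  exists w : n.-tuple bool, occ (pw x a b) w = f a b n k.
Proof.
move=> hk.
have hs : size (nseq k x ++ nseq (n - k) (~~ x)) == n by rewrite size_cat !size_nseq subnKC.
by exists (Tuple hs); rewrite /= occ_sorted.
Qed.

Lemma occ_le_f x a b n (w : n.-tuple bool) :
  occ (pw x a b) w <= f a b n (count_mem x w).
Proof. by apply: leq_trans (occ_le x a b w) _; rewrite countN size_tuple. Qed.

Lemma count_tuple_le n (w : n.-tuple bool) y : count_mem y w <= n.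
Proof. by apply: leq_trans (count_size _ _) _; rewrite size_tuple. Qed.

Lemma M_attained x a b n : exists2 ks, ks <= n & (M n (pw x a b) = f a b n ks /\
  forall t, t <= n -> f a b n t <= M n (pw x a b)).
Proof.
have [w0 hw0] := @eq_bigmax _ (fun w : n.-tuple bool => occ (pw x a b) w) (ltac:(by rewrite card_tuple card_bool expn_gt0)).
exists (count_mem x w0); first exact: count_tuple_le.
have hle : forall t, t <= n -> f a b n t <= M n (pw x a b).
  move=> t ht; have [w hw] := sorted_tuple x a b ht.
  by rewrite -hw; apply: leq_bigmax.
split => //.
apply/eqP; rewrite eqn_leq hle ?andbT; last exact: count_tuple_le.
by rewrite /M hw0 occ_le_f.
Qed.

Lemma no_Mm1 x a b n (w : n.-tuple bool) : 0 < a + b -> a.+1 + b.+1 + 2 <= n ->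
  occ (pw x a.+1 b.+1) w = (M n (pw x a.+1 b.+1)).-1 -> False.
Proof.
move=> hab hn hw.
have [ks hks [hM hmax]] := M_attained x a.+1 b.+1 n.
move: hw hM hmax; move: (M n (pw x a.+1 b.+1)) => M0 hw hM hmax.
have h3 : 3 <= M0.
  have := hmax a.+1 (ltac:(lia)).
  rewrite /f binn mul1n => h.
  have : n - a.+1 <= 'C(n - a.+1, b.+1) by apply: binGE; lia.
  lia.
have hZ := count_tuple_le w x.
have hO : count_mem (~~ x) w = n - count_mem x w by rewrite countN size_tuple.
case: (sorted_or x w) => [u|sw].
- have hu := occ_uns a b u.
  rewrite hO in hu.
  move: (count_mem x w) hZ hu hO => Z hZ hu hO.
  have hfZ := hmax Z hZ; rewrite /f in hfZ.
  case: (leqP Z a) => hza.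
    by move: hu; rewrite (bin_small (n:=Z) (m:=a.+1)) //; lia.
  case: (leqP (n - Z) b) => hzb.
    by move: hu; rewrite (bin_small (n:=n - Z) (m:=b.+1)) ?muln0 //; lia.
  have c1 : 'C(Z.-1, a) * 'C((n - Z).-1, b) <= 1 by lia.
  have cZ : 0 < 'C(Z.-1, a) by rewrite bin_gt0; lia.
  have cO : 0 < 'C((n - Z).-1, b) by rewrite bin_gt0; lia.
  have cZ1 : 'C(Z.-1, a) <= 1.
    by apply: leq_trans c1; rewrite -{1}(muln1 'C(_, _)) leq_mul2l cO orbT.
  have cO1 : 'C((n - Z).-1, b) <= 1.
    by apply: leq_trans c1; rewrite -{1}(mul1n 'C(_, _)) leq_mul2r cZ orbT.
  have ha : a = 0 \/ Z = a.+1.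
    case: (posnP a) => [|ap]; first by left.
    case: (ltngtP Z a.+1) => hh; [lia | | by right].
    have : Z.-1 <= 'C(Z.-1, a) by apply: binGE; lia.
    lia.
  have hb : b = 0 \/ n - Z = b.+1.
    case: (posnP b) => [|bp]; first by left.
    case: (ltngtP (n - Z) b.+1) => hh; [lia | | by right].
    have : (n - Z).-1 <= 'C((n - Z).-1, b) by apply: binGE; lia.
    lia.
  case: ha => ha; case: hb => hb.
  + lia.
  + subst a. rewrite hb /= !bin0 binn !mul1n bin1 in hu.
    have := hmax Z.-1 (leq_trans (leq_pred Z) hZ).
    have e2 : n - Z.-1 = b.+2 by lia.
    rewrite /f bin1 e2 binSn => hf; rewrite binn muln1 in hu.
    have : (Z.-1) * 3 <= Z.-1 * b.+2 by rewrite leq_mul2l; apply/orP; right; lia.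
    lia.
  + subst b. rewrite ha /= !bin0 binn !muln1 bin1 in hu.
    have hZn : Z.+1 <= n by lia.
    have := hmax Z.+1 hZn.
    rewrite /f ha binSn bin1 => hf.
    have : 3 * (n - a.+2) <= a.+2 * (n - a.+2) by rewrite leq_mul2r; apply/orP; right; lia.
    rewrite binn mul1n in hu. lia.
  + lia.
- have e : occ (pw x a.+1 b.+1) w = f a.+1 b.+1 n (count_mem x w).
    by rewrite {1}sw occ_sorted hO.
  apply: (@unimod a b n (count_mem x w) ks hab hn hZ hks).
  + by move=> t ht; rewrite -hM; apply: hmax.
  + lia.
  + by rewrite -e hw hM.
Qed.

Theorem mainTheorem16 (p : seq bool) :
  nruns p = 2 -> 3 <= size p ->
  forall n : nat, size p + 2 <= n ->
    B n p (M n p).-1 = 0 /\ internal_zero n p.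
Proof.
move=> /nruns2 [x [a [b ->]]] hs n hn.
have hsz : size (pw x a.+1 b.+1) = a.+1 + b.+1 by rewrite /pw size_cat !size_nseq.
rewrite hsz in hs hn.
have hab : 0 < a + b by lia.
have hB : B n (pw x a.+1 b.+1) (M n (pw x a.+1 b.+1)).-1 = 0.
  rewrite /B; apply: eq_card0 => w; rewrite !inE; apply/negbTE/eqP => h.
  exact: no_Mm1 hab hn h.
split => //.
have h3 : 3 <= M n (pw x a.+1 b.+1).
  have [ks hks [hM hmax]] := M_attained x a.+1 b.+1 n.
  have := hmax a.+1 (ltac:(lia)).
  rewrite /f binn mul1n => h.
  have : n - a.+1 <= 'C(n - a.+1, b.+1) by apply: binGE; lia.
  lia.
exists 0, (M n (pw x a.+1 b.+1)).-1, (M n (pw x a.+1 b.+1)); split => //.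
- apply/andP; split; lia.
- have [w hw] := sorted_tuple x a.+1 b.+1 (leqnn n).
  rewrite /B -lt0n card_gt0; apply/set0Pn; exists w.
  by rewrite inE hw /f subnn bin0n muln0.
- have [w0 hw0] := @eq_bigmax _ (fun w : n.-tuple bool => occ (pw x a.+1 b.+1) w) (ltac:(by rewrite card_tuple card_bool expn_gt0)).
  rewrite /B -lt0n card_gt0; apply/set0Pn; exists w0.
  by rewrite inE /M hw0.
Qed.
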